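(* Let $S=\{z\in\mathbb C:0<\operatorname{Im} z<1\}$. For every $M\ge1$ there is $K(M)\ge1$, with $\lim_{M\to1}K(M)=1$, such that the following holds: if $f_0,f_1\colon\mathbb R\to\mathbb R$ are diffeomorphisms with $1/M\le f_k'(x)\le M$ for $k=0,1$ and $|f_0(x)-f_1(x)|\le M-1$ for all $x\in\mathbb R$, then there exists a $K(M)$-quasiconformal map $f\colon S\to S$ whose boundary values satisfy $f(x+ik)=f_k(x)+ik$ for $k=0,1$ and all $x\in\mathbb R$. *)

(* Defs.v *)
(* The complex plane C is modelled as R * R
   (x + i y  <->  (x, y)), with the Euclidean distance. *)
From HB Require Import structures.
From mathcomp Require Import all_boot all_order all_algebra.
From mathcomp Require Import all_classical all_reals all_analysis.
Set Implicit Arguments. Unset Strict Implicit. Unset Printing Implicit Defensive.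
Import Order.TTheory GRing.Theory Num.Theory.
Import numFieldNormedType.Exports.
Local Open Scope classical_set_scope.
Local Open Scope ring_scope.

Section Defs.
Variable R : realType.

Definition dist2 (p q : R * R) : R :=
  Num.sqrt ((p.1 - q.1) ^+ 2 + (p.2 - q.2) ^+ 2).

Definition strip : set (R * R) := [set p | 0 < p.2 < 1].
Definition cstrip : set (R * R) := [set p | 0 <= p.2 <= 1].

(* For all small radii r, the ratio
     L_F(z,r) / l_F(z,r) = (max_{|w-z|=r} |F w - F z|) / (min_{|w-z|=r} |F w - F z|)
   is at most c (written without sup/inf, i.e. unfolded). *)
Definition ratio_eventually_le (F : R * R -> R * R) (z : R * R) (c : R) : Prop :=
  exists2 d : R, 0 < d & forall r : R, 0 < r < d ->
    forall w1 w2 : R * R, dist2 w1 z = r -> dist2 w2 z = r ->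
      dist2 (F w1) (F z) <= c * dist2 (F w2) (F z).

(* metric dilatation H_F(z) := limsup_{r->0+} L_F(z,r)/l_F(z,r) *)
Definition metric_dil_le (F : R * R -> R * R) (z : R * R) (K : R) : Prop :=
  forall e : R, 0 < e -> ratio_eventually_le F z (K + e).
Definition metric_dil_finite (F : R * R -> R * R) (z : R * R) : Prop :=
  exists c : R, ratio_eventually_le F z c.

Definition homeo_strip (F : R * R -> R * R) : Prop :=
  [/\ (forall z, strip z -> strip (F z)),
      {within strip, continuous F} &
      exists G : R * R -> R * R,
        [/\ (forall z, strip z -> strip (G z)),
            {within strip, continuous G},
            (forall z, strip z -> G (F z) = z) &
            (forall z, strip z -> F (G z) = z)]].

Definition leb2 := ((@lebesgue_measure R) \x (@lebesgue_measure R))%E.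

(* K-quasiconformal map S -> S (Gehring's metric definition):
   a homeomorphism of S with H_F finite everywhere in S and H_F <= K a.e. in S *)
Definition qc_strip (K : R) (F : R * R -> R * R) : Prop :=
  [/\ homeo_strip F,
      (forall z, strip z -> metric_dil_finite F z) &
      {ae leb2, forall z, strip z -> metric_dil_le F z K}].

Definition diffeo (f : R -> R) : Prop :=
  [/\ bijective f, (forall x, derivable f x 1) & continuous (derive1 f)].

End Defs.

(* Main.v *)
Require Import Defs.
From HB Require Import structures.
From mathcomp Require Import all_boot all_order all_algebra.
From mathcomp Require Import all_classical all_reals all_analysis.
From mathcomp Require Import ring lra.
Import Order.TTheory GRing.Theory Num.Theory.
Import numFieldNormedType.Exports.
Local Open Scope classical_set_scope.
Local Open Scope ring_scope.
Lemma alg_up (R : realType) (M a b u v : R) :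
  1 <= M -> 1 <= a * M -> a <= M -> -(M-1) <= b <= M - 1 ->
  (a * u + b * v) ^+ 2 + v ^+ 2 <= M ^+ 4 * (u ^+ 2 + v ^+ 2).
Proof.
move=> M1 aM aleM /andP[b1 b2].
have a0 : 0 <= a by nra.
have h1 : 2 * b * u * v <= (M - 1) * (u ^+ 2 + v ^+ 2).
  have := mulr_ge0 (x:=M-1-b) (y:=(u+v)^+2) ltac:(lra) (sqr_ge0 _).
  have := mulr_ge0 (x:=M-1+b) (y:=(u-v)^+2) ltac:(lra) (sqr_ge0 _).
  nra.
have h2 : a * (2 * b * u * v) <= a * ((M - 1) * (u ^+ 2 + v ^+ 2)) by apply: ler_wpM2l.
have h3 : a ^+ 2 <= M ^+ 2 by nra.
have h4 : b ^+ 2 <= (M-1) ^+ 2 by nra.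
have c1 : 0 <= M ^+ 4 - M ^+ 2 - M * (M - 1).
  have -> : M ^+ 4 - M ^+ 2 - M * (M - 1) = M * (M - 1) * (M ^+ 2 + M - 1) by ring.
  apply: mulr_ge0; [apply: mulr_ge0|]; nra.
have c2 : 0 <= M ^+ 4 - M * (M - 1) - (M - 1) ^+ 2 - 1.
  have -> : M ^+ 4 - M * (M - 1) - (M - 1) ^+ 2 - 1 = (M - 1) * (M ^+ 3 + M ^+ 2 - M + 2) by ring.
  apply: mulr_ge0; nra.
have e1 := mulr_ge0 c1 (sqr_ge0 u).
have e2 := mulr_ge0 c2 (sqr_ge0 v).
have e3 := ler_wpM2r (sqr_ge0 u) h3.
have e4 := ler_wpM2r (sqr_ge0 v) h4.
have e5 : a * ((M - 1) * (u ^+ 2 + v ^+ 2)) <= M * ((M - 1) * (u ^+ 2 + v ^+ 2)).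
  apply: ler_wpM2r => //; apply: mulr_ge0; nra.
nra.
Qed.

Lemma alg_lo (R : realType) (M a b u v : R) :
  1 <= M -> 1 <= a * M -> a <= M -> -(M-1) <= b <= M - 1 ->
  u ^+ 2 + v ^+ 2 <= M ^+ 4 * ((a * u + b * v) ^+ 2 + v ^+ 2).
Proof.
move=> M1 aM aleM /andP[b1 b2].
set p := a * u + b * v.
have h1 : - (2 * b * p * v) <= (M - 1) * (p ^+ 2 + v ^+ 2).
  have := mulr_ge0 (x:=M-1-b) (y:=(p-v)^+2) ltac:(lra) (sqr_ge0 _).
  have := mulr_ge0 (x:=M-1+b) (y:=(p+v)^+2) ltac:(lra) (sqr_ge0 _).
  nra.
have h4 : b ^+ 2 <= (M-1) ^+ 2 by nra.
have e4 := ler_wpM2r (sqr_ge0 v) h4.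
have au : (a * u) ^+ 2 <= M * p ^+ 2 + ((M - 1) + (M-1)^+2) * v ^+ 2.
  have -> : a * u = p - b * v by rewrite /p; ring.
  nra.
have aM2 : 1 <= (a * M) ^+ 2 by nra.
have u1 : u ^+ 2 <= M ^+ 2 * (a * u) ^+ 2.
  have := ler_wpM2r (sqr_ge0 u) aM2. 
  have -> : (a * M) ^+ 2 * u ^+ 2 = M ^+ 2 * (a * u) ^+ 2 by ring.
  by rewrite mul1r.
have u2 := ler_wpM2l (x := M ^+ 2) (sqr_ge0 _) au.
have c1 : 0 <= M ^+ 4 - M ^+ 3.
  have -> : M ^+ 4 - M ^+ 3 = M ^+ 3 * (M - 1) by ring.
  apply: mulr_ge0; [apply: exprn_ge0|]; lra.
have c2 : 1 <= M ^+ 3 by apply: exprn_ege1.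
have e1 := mulr_ge0 c1 (sqr_ge0 p).
have e2 := mulr_ge0 (x := M ^+ 3 - 1) ltac:(lra) (sqr_ge0 v).
nra.
Qed.
Lemma diffeo_cont (R : realType) (f : R -> R) : diffeo f -> continuous f.
Proof.
case=> _ d _ x; apply: differentiable_continuous; exact/derivable1_diffP.
Qed.
Arguments diffeo_cont {R f}.

Lemma mvt_ex (R : realType) (f : R -> R) : diffeo f ->
  forall a b, exists c, f b - f a = derive1 f c * (b - a).
Proof.
move=> hf.
have H : forall a b, a <= b -> exists c, f b - f a = derive1 f c * (b - a).
  move=> a b ab.
  have h1 : forall x, x \in `]a, b[%R -> is_derive x 1 f (derive1 f x).
    move=> x _; case: hf => _ d _; rewrite derive1E; exact: derivableP.
  have h2 : {within `[a, b], continuous f} by exact/continuous_subspaceT/diffeo_cont.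
  have [c _ hc] := @MVT_segment R f (derive1 f) a b ab h1 h2.
  by exists c.
move=> a b; case: (leP a b) => ab; first exact: H.
have [c hc] := H b a (ltW ab); exists c.
by rewrite -[LHS]opprB hc; ring.
Qed.
Arguments mvt_ex {R f}.

Definition hypM (R : realType) (M : R) (f0 f1 : R -> R) : Prop :=
  1 <= M /\ [/\ diffeo f0, diffeo f1,
      (forall x, M^-1 <= derive1 f0 x <= M),
      (forall x, M^-1 <= derive1 f1 x <= M) &
      (forall x, `|f0 x - f1 x| <= M - 1)].

Arguments hypM {R}.

Definition gy (R : realType) (f0 f1 : R -> R) (y x : R) : R :=
  (1 - y) * f0 x + y * f1 x.
Arguments gy {R}.

Lemma g_diff (R : realType) (M : R) f0 f1 y a b : hypM M f0 f1 -> 0 <= y <= 1 ->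
  exists al, [/\ 1 <= al * M, al <= M & gy f0 f1 y b - gy f0 f1 y a = al * (b - a)].
Proof.
case=> M1 [d0 d1 b0 b1 _] /andP[y0 y1].
have [c0 h0] := mvt_ex d0 a b.
have [c1 h1] := mvt_ex d1 a b.
exists ((1 - y) * derive1 f0 c0 + y * derive1 f1 c1).
have /andP[l0 u0] := b0 c0; have /andP[l1 u1] := b1 c1.
have MV : M^-1 * M = 1 by rewrite mulVf //; apply: lt0r_neq0; lra.
move: MV l0 l1; set m := M^-1 => MV l0 l1.
have e1 := mulr_ge0 (x := 1 - y) (y := derive1 f0 c0 - m) ltac:(lra) ltac:(lra).
have e2 := mulr_ge0 (x := y) (y := derive1 f1 c1 - m) ltac:(lra) ltac:(lra).
have e3 := mulr_ge0 (x := 1 - y) (y := M - derive1 f0 c0) ltac:(lra) ltac:(lra).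
have e4 := mulr_ge0 (x := y) (y := M - derive1 f1 c1) ltac:(lra) ltac:(lra).
split.
- have : m <= (1 - y) * derive1 f0 c0 + y * derive1 f1 c1 by lra.
  move=> h; have := ler_wpM2r (x:=M) ltac:(lra) h; rewrite MV.
  by [].
- lra.
- rewrite /gy; have -> : (1 - y) * f0 b + y * f1 b - ((1 - y) * f0 a + y * f1 a)
    = (1 - y) * (f0 b - f0 a) + y * (f1 b - f1 a) by ring.
  rewrite h0 h1; ring.
Qed.
Arguments g_diff {R M f0 f1 y}.

Lemma g_abs (R : realType) (M : R) f0 f1 y a b : hypM M f0 f1 -> 0 <= y <= 1 ->
  `|b - a| <= M * `|gy f0 f1 y b - gy f0 f1 y a|.
Proof.
move=> H Hy; have [al [h1 h2 ->]] := g_diff a b H Hy.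
have M1 : 1 <= M by case: H.
have al0 : 0 <= al by nra.
rewrite normrM (ger0_norm al0); have := normr_ge0 (b - a); nra.
Qed.
Arguments g_abs {R M f0 f1 y}.

Lemma g_cont (R : realType) (M : R) f0 f1 y : hypM M f0 f1 -> continuous (gy f0 f1 y).
Proof.
case=> _ [d0 d1 _ _ _] x; rewrite /gy.
apply: cvgD; apply: cvgM; first exact: cvg_cst; first exact: diffeo_cont.
  exact: cvg_cst.
exact: diffeo_cont.
Qed.
Arguments g_cont {R M f0 f1}.

Definition cl (R : realType) (y : R) : R := if y < 0 then 0 else if 1 < y then 1 else y.
Arguments cl {R}.

Lemma cl01 (R : realType) (y : R) : 0 <= cl y <= 1.
Proof. rewrite /cl; case: (ltP y 0) => h1; case: (ltP 1 y) => h2; apply/andP; split; lra. Qed.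

Lemma cl_id (R : realType) (y : R) : 0 <= y <= 1 -> cl y = y.
Proof. move=> /andP[h1 h2]; rewrite /cl; case: (ltP y 0) => h3; case: (ltP 1 y) => h4; lra. Qed.

Lemma cl_lip (R : realType) (a b : R) : `|cl a - cl b| <= `|a - b|.
Proof.
have h1 := ler_norm (a - b).
have h2 : -(a - b) <= `|a - b| by rewrite -normrN ler_norm.
rewrite /cl ler_norml; case: (ltP a 0) => ?; case: (ltP 1 a) => ?;
  case: (ltP b 0) => ?; case: (ltP 1 b) => ?; apply/andP; split; lra.
Qed.

Lemma g_surj (R : realType) (M : R) f0 f1 y : hypM M f0 f1 -> 0 <= y <= 1 ->
  forall p, exists x, gy f0 f1 y x = p.
Proof.
move=> H Hy p.
have M1 : 1 <= M by case: H.
set d := `|p - gy f0 f1 y 0|.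
have d0 : 0 <= d by exact: normr_ge0.
have hp1 : p - gy f0 f1 y 0 <= d by exact: ler_norm.
have hp2 : -(p - gy f0 f1 y 0) <= d by rewrite /d -normrN ler_norm.
have [a1 [ha1 ha2 ea]] := g_diff 0 (- (M * d)) H Hy.
have [b1 [hb1 hb2 eb]] := g_diff 0 (M * d) H Hy.
have ga : gy f0 f1 y (- (M * d)) <= p.
  have hh : a1 * (M * d) >= d by have := mulr_ge0 (x := a1 * M - 1) (y := d) ltac:(lra) d0; nra.
  rewrite subr0 in ea.
  nra.
have gb : p <= gy f0 f1 y (M * d).
  have hh : b1 * (M * d) >= d by have := mulr_ge0 (x := b1 * M - 1) (y := d) ltac:(lra) d0; nra.
  rewrite subr0 in eb.
  nra.
have lab : - (M * d) <= M * d by have := mulr_ge0 (x := M) (y := d) ltac:(lra) d0; lra.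
have gc : {within `[- (M * d), M * d], continuous (gy f0 f1 y)}.
  by apply: continuous_subspaceT; exact: g_cont H.
have [c _ hc] := IVT lab gc 
  (v := p) ltac:(apply/andP; split; [rewrite ge_min ga // | rewrite le_max gb orbT //]).
by exists c.
Qed.
Arguments g_surj {R M f0 f1 y}.
Arguments cl01 {R}. Arguments cl_id {R}. Arguments cl_lip {R}.

Definition Fm (R : realType) (f0 f1 : R -> R) (p : R * R) : R * R :=
  (gy f0 f1 p.2 p.1, p.2).
Arguments Fm {R}.

Definition Gm (R : realType) (f0 f1 : R -> R) (p : R * R) : R * R :=
  (xget 0 [set x | gy f0 f1 (cl p.2) x = p.1], p.2).
Arguments Gm {R}.

Lemma G_spec (R : realType) (M : R) f0 f1 p : hypM M f0 f1 ->
  gy f0 f1 (cl p.2) (Gm f0 f1 p).1 = p.1.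
Proof.
move=> H; rewrite /Gm /=.
have := @xgetPex R 0 [set x | gy f0 f1 (cl p.2) x = p.1] (g_surj H (cl01 _) p.1).
by [].
Qed.

Lemma G_lip (R : realType) (M : R) f0 f1 w z : hypM M f0 f1 ->
  `|(Gm f0 f1 w).1 - (Gm f0 f1 z).1| <= (M * M) * (`|w.1 - z.1| + `|w.2 - z.2|).
Proof.
move=> H.
have [M1 [_ _ _ _ cl0]] := H.
set x' := (Gm f0 f1 w).1; set x := (Gm f0 f1 z).1.
set y' := cl w.2; set y := cl z.2.
have hw : gy f0 f1 y' x' = w.1 by exact: (@G_spec R M f0 f1 w H).
have hz : gy f0 f1 y x = z.1 by exact: (@G_spec R M f0 f1 z H).
have h1 := g_abs x x' H (cl01 w.2).
rewrite -/y' hw in h1.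
have e : w.1 - gy f0 f1 y' x = (w.1 - z.1) + (y' - y) * (f0 x - f1 x).
  by rewrite -hz /gy; ring.
rewrite e in h1.
have h2 : `|(w.1 - z.1) + (y' - y) * (f0 x - f1 x)| <= `|w.1 - z.1| + M * `|w.2 - z.2|.
  apply: le_trans (ler_normD _ _) _; rewrite lerD2l normrM.
  have := cl_lip w.2 z.2; rewrite -/y -/y' => hy.
  have hf := cl0 x.
  have : `|y' - y| * `|f0 x - f1 x| <= `|w.2 - z.2| * M.
    apply: ler_pM; [exact: normr_ge0 | exact: normr_ge0 | exact: hy | lra].
  by move=> hh; apply: le_trans hh _; rewrite mulrC.
have h3 := ler_wpM2l (x := M) ltac:(lra) h2.
have n1 := normr_ge0 (w.1 - z.1); have n2 := normr_ge0 (w.2 - z.2).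
have := mulr_ge0 (x := M * (M - 1)) (y := `|w.1 - z.1|) ltac:(nra) n1.
nra.
Qed.

Lemma sqrt_scale (R : realType) (M a b : R) : 0 <= b -> a <= M ^+ 4 * b ->
  Num.sqrt a <= M ^+ 2 * Num.sqrt b.
Proof.
move=> b0 ab.
rewrite -[M ^+ 2](ger0_norm (sqr_ge0 M)) -sqrtr_sqr -sqrtrM ?sqr_ge0 // ler_sqrt.
  by rewrite -exprM.
by apply: mulr_ge0 => //; apply: sqr_ge0.
Qed.

Lemma F_dist (R : realType) (M : R) f0 f1 w z : hypM M f0 f1 -> 0 <= z.2 <= 1 ->
  dist2 (Fm f0 f1 w) (Fm f0 f1 z) <= M ^+ 2 * dist2 w z /\
  dist2 w z <= M ^+ 2 * dist2 (Fm f0 f1 w) (Fm f0 f1 z).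
Proof.
move=> H Hz.
have [M1 [_ _ _ _ cl0]] := H.
have [al [a1 a2 ea]] := g_diff z.1 w.1 H Hz.
set u := w.1 - z.1; set v := w.2 - z.2.
set be := f1 w.1 - f0 w.1.
have hb : -(M - 1) <= be <= M - 1.
  by rewrite -ler_norml /be distrC.
have e : (Fm f0 f1 w).1 - (Fm f0 f1 z).1 = al * u + be * v.
  rewrite /Fm /= -ea /u /v /be /gy; ring.
rewrite /dist2 e /=; rewrite -/v.
split; apply: sqrt_scale.
- by apply: addr_ge0; apply: sqr_ge0.
- exact: alg_up.
- by apply: addr_ge0; apply: sqr_ge0.
- exact: alg_lo.
Qed.

Lemma lip_cont (R : realType) (g : R * R -> R) (C : R) : 0 <= C ->
  (forall w z, `|g w - g z| <= C * (`|w.1 - z.1| + `|w.2 - z.2|)) -> continuous g.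
Proof.
move=> C0 H z; apply/cvgrPdist_lt => e e0.
set d := e / (2 * (C + 1)).
have d0 : 0 < d by apply: divr_gt0 => //; lra.
have hd : (C + 1) * (2 * d) = e.
  rewrite /d; field; lra.
have h1 : fst w @[w --> z] --> z.1 by exact: cvg_fst.
have h2 : snd w @[w --> z] --> z.2 by exact: cvg_snd.
move/cvgrPdist_lt: h1 => /(_ _ d0) h1.
move/cvgrPdist_lt: h2 => /(_ _ d0) h2.
near=> w.
have a1 : `|z.1 - w.1| < d by near: w.
have a2 : `|z.2 - w.2| < d by near: w.
have := H z w.
have n1 := normr_ge0 (z.1 - w.1); have n2 := normr_ge0 (z.2 - w.2).
have := mulr_ge0 C0 (addr_ge0 n1 n2).
nra.
Unshelve. all: by end_near.
Qed.

Lemma Fm_cont (R : realType) (M : R) f0 f1 : hypM M f0 f1 -> continuous (Fm f0 f1).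
Proof.
move=> [_ [d0 d1 _ _ _]] z.
rewrite /continuous_at /Fm. apply: (cvg_pair (G := nbhs (gy f0 f1 z.2 z.1)) (H := nbhs z.2)); last exact: cvg_snd.
rewrite /gy.
have c0 : (f0 \o fst) @ z --> f0 z.1.
  apply: cvg_comp; [exact: cvg_fst | exact: diffeo_cont].
have c1 : (f1 \o fst) @ z --> f1 z.1.
  apply: cvg_comp; [exact: cvg_fst | exact: diffeo_cont].
have s : snd @ z --> z.2 by exact: cvg_snd.
apply: cvgD; apply: cvgM => //.
apply: cvgB => //; exact: cvg_cst.
Qed.

Lemma Gm_cont (R : realType) (M : R) f0 f1 : hypM M f0 f1 -> continuous (Gm f0 f1).
Proof.
move=> H z.
rewrite /continuous_at.
change ((fun p => ((Gm f0 f1 p).1, p.2)) @ z --> ((Gm f0 f1 z).1, z.2)).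
apply: (cvg_pair (G := nbhs (Gm f0 f1 z).1) (H := nbhs z.2)); last exact: cvg_snd.
have M1 : 1 <= M by case: H.
have hc : continuous (fun p => (Gm f0 f1 p).1).
  apply: (@lip_cont R _ (M * M)); first nra.
  move=> w z'; exact: G_lip.
exact: hc.
Qed.
Arguments F_dist {R M f0 f1}.
Arguments Fm_cont {R M f0 f1}.
Arguments Gm_cont {R M f0 f1}.

Lemma dil_le (R : realType) (M : R) f0 f1 z : hypM M f0 f1 -> 0 <= z.2 <= 1 ->
  metric_dil_le (Fm f0 f1) z (M ^+ 4).
Proof.
move=> H hz e e0; exists 1 => // r _ w1 w2 h1 h2.
have [u1 _] := F_dist w1 z H hz.
have [_ l2] := F_dist w2 z H hz.
rewrite h1 in u1; rewrite h2 in l2.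
set D2 := dist2 (Fm f0 f1 w2) (Fm f0 f1 z) in l2 *.
have D0 : 0 <= D2 by exact: sqrtr_ge0.
have e1 := ler_wpM2l (x := M ^+ 2) (sqr_ge0 M) l2.
have e2 : M ^+ 2 * (M ^+ 2 * D2) = M ^+ 4 * D2 by rewrite mulrA -exprD.
have e3 := mulr_ge0 (ltW e0) D0.
lra.
Qed.
Arguments dil_le {R M f0 f1 z}.

Theorem lemma1 (R : realType) :
  exists K : R -> R,
    [/\ (forall M : R, 1 <= M -> 1 <= K M),
        K x @[x --> (1:R)^'+] --> (1:R) &
        forall M : R, 1 <= M ->
        forall f0 f1 : R -> R,
          diffeo f0 -> diffeo f1 ->
          (forall x, M^-1 <= derive1 f0 x <= M) ->
          (forall x, M^-1 <= derive1 f1 x <= M) ->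
          (forall x, `|f0 x - f1 x| <= M - 1) ->
          exists F : R * R -> R * R,
            [/\ qc_strip (K M) F,
                {within (@cstrip R), continuous F} &
                forall x : R, F (x, 0) = (f0 x, 0) /\ F (x, 1) = (f1 x, 1)]].
Proof.
exists (fun M => M ^+ 4); split.
- by move=> M M1; apply: exprn_ege1.
- apply: cvg_at_right_filter.
  rewrite -[X in _ --> X](expr1n R 4); exact: exprn_continuous.
move=> M M1 f0 f1 d0 d1 b0 b1 c.
have H : hypM M f0 f1 by split.
have FC := Fm_cont H; have GC := Gm_cont H.
have M1' : 1 <= M by [].
exists (Fm f0 f1); split.
- split.
  + split.
    * by move=> z.
    * exact: continuous_subspaceT.
    * exists (Gm f0 f1); split.
      -- by move=> z.
      -- exact: continuous_subspaceT.
      -- move=> z /= /andP[z1 z2].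
         have hz : 0 <= z.2 <= 1 by apply/andP; split; lra.
         have hx : (Gm f0 f1 (Fm f0 f1 z)).1 = z.1.
           have hg : gy f0 f1 z.2 (Gm f0 f1 (Fm f0 f1 z)).1 = gy f0 f1 z.2 z.1.
             rewrite -{1}(cl_id _ hz); exact: (@G_spec R M f0 f1 (Fm f0 f1 z) H).
           have := g_abs z.1 (Gm f0 f1 (Fm f0 f1 z)).1 H hz.
           by rewrite hg subrr normr0 mulr0 normr_le0 subr_eq0 => /eqP.
         rewrite (surjective_pairing (Gm f0 f1 (Fm f0 f1 z))) hx.
         by case: z {hz hx z1 z2}.
      -- move=> z /= /andP[z1 z2].
         have hz : 0 <= z.2 <= 1 by apply/andP; split; lra.
         have hg : gy f0 f1 z.2 (Gm f0 f1 z).1 = z.1.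
           rewrite -{1}(cl_id _ hz); exact: (@G_spec R M f0 f1 z H).
         change ((gy f0 f1 z.2 (Gm f0 f1 z).1, z.2) = z); rewrite hg.
         by case: z {hz hg z1 z2}.
  + move=> z /= /andP[z1 z2].
    have hz : 0 <= z.2 <= 1 by apply/andP; split; lra.
    exists (M ^+ 4 + 1); exact: (dil_le H hz).
  + apply: aeW => z /= /andP[z1 z2].
    have hz : 0 <= z.2 <= 1 by apply/andP; split; lra.
    exact: dil_le H hz.
- exact: continuous_subspaceT.
- move=> x; rewrite /Fm /gy /=; split; congr (_, _).
  + by rewrite subr0 mul1r mul0r addr0.
  + by rewrite subrr mul0r add0r mul1r.
Qed.
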